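(* Let $X$ be a topological space, let $Y$ be a Urysohn space, let $S$ be a dense subset of $X$ and let $f:S\to Y$ be continuous. Then the following are equivalent: (1) $f$ has a continuous extension to $X$; (2) for every open set $V$ of $Y$ the set $X_{\theta}(f^{-1}(V))$ is open in $X$, and for every family $\{A_\beta\}$ of closed subsets of $Y$ with $\bigcap_\beta A_\beta=\emptyset$ one has $\bigcap_\beta\overline{f^{-1}(A_\beta)}=\emptyset$ (closures in $X$).
   Context: A Urysohn space is one in which any two distinct points have open neighborhoods with disjoint closures. $\mathcal N(x)$ is the set of open neighborhoods of $x$ in $X$. For $M\subseteq Y$, the $\theta$-closure $\mathrm{cl}_\theta M$ is the set of $y\in Y$ such that $\mathrm{cl}\,U\cap M\neq\emptyset$ for every open $U\ni y$. For $V\subseteq Y$, $X_\theta(f^{-1}(V))$ is the set of points $x\in X$ with $\bigcap\{\mathrm{cl}_\theta f(P\cap S):P\in\mathcal N(x)\}\subseteq V$. *)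

(* Defs.v *)
From mathcomp Require Import all_boot all_order.
From mathcomp Require Import all_classical topology.
Set Implicit Arguments. Unset Strict Implicit. Unset Printing Implicit Defensive.
Local Open Scope classical_set_scope.

Definition urysohn_space (Y : topologicalType) : Prop :=
  forall y1 y2 : Y, y1 <> y2 ->
    exists U1 U2 : set Y, [/\ open U1, U1 y1, open U2, U2 y2 &
                         closure U1 `&` closure U2 = set0].

Definition theta_closure (Y : topologicalType) (M : set Y) : set Y :=
  [set y | forall U : set Y, open U -> U y -> closure U `&` M !=set0].

(* X_theta(f^{-1}(V)) for f : S -> Y, S ⊆ X (f given as a function on X,
   only its values on S matter). *)
Definition X_theta (X Y : topologicalType) (S : set X) (f : X -> Y) (V : set Y)
  : set X :=
  [set x | \bigcap_(P in [set P : set X | open P /\ P x])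
             theta_closure (f @` (P `&` S)) `<=` V].

(* Main.v *)
Require Import Defs.
From mathcomp Require Import all_boot all_order.
From mathcomp Require Import all_classical topology.
Local Open Scope classical_set_scope.

Set Implicit Arguments.
Section Aux.
Variables (X Y : topologicalType).

Lemma nbhs_open_ex (x : X) (B : set X) : nbhs x B ->
  exists O : set X, [/\ open O, O x & O `<=` B].
Proof. by rewrite nbhsE => -[O [oO Ox] OB]; exists O. Qed.

Lemma within_ex (S : set X) (f : X -> Y) : {within S, continuous f} ->
  forall s, S s -> forall U : set Y, open U -> U (f s) ->
  exists P : set X, [/\ open P, P s & forall z, P z -> S z -> U (f z)].
Proof.
move=> /subspace_continuousP Hc s Ss U oU Ufs.
have := Hc s Ss U (open_nbhs_nbhs (conj oU Ufs)).
move=> /nbhs_open_ex [O [oO Os OB]]; exists O; split => //.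
Qed.

Lemma closure_theta (M : set Y) : closure M `<=` theta_closure M.
Proof.
move=> y cy U oU Uy.
have [z [Mz Uz]] := cy U (open_nbhs_nbhs (conj oU Uy)).
by exists z; split => //; apply: subset_closure.
Qed.

Definition K (S : set X) (f : X -> Y) (x : X) : set Y :=
  \bigcap_(P in [set P : set X | open P /\ P x])
             theta_closure (f @` (P `&` S)).

Lemma X_thetaE (S : set X) (f : X -> Y) V x :
  X_theta S f V x = (K S f x `<=` V).
Proof. by []. Qed.

Lemma fs_in_K (S : set X) (f : X -> Y) s : S s -> K S f s (f s).
Proof.
move=> Ss P [oP Ps] U oU Ufs; exists (f s); split.
  exact: subset_closure.
by exists s.
Qed.

Lemma K_sub (S : set X) (f : X -> Y) : urysohn_space Y ->
  {within S, continuous f} -> forall s, S s -> forall y, K S f s y -> y = f s.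
Proof.
move=> uY Hc s Ss y Ky; apply: contrapT => yfs.
have [U1 [U2 [oU1 U1y oU2 U2f dis]]] := uY _ _ yfs.
have [P [oP Ps PU]] := within_ex Hc s Ss U2 oU2 U2f.
have [z [cz [t [Pt St] tz]]] := Ky P (conj oP Ps) U1 oU1 U1y.
have : (closure U1 `&` closure U2) z.
  by split => //; rewrite -tz; apply: subset_closure; apply: PU.
by rewrite dis.
Qed.

End Aux.
Unset Implicit Arguments.
Arguments K {X Y}.
Arguments X_thetaE {X Y}.
Arguments fs_in_K {X Y}.
Arguments closure_theta {Y}.
Arguments nbhs_open_ex {X}.
Arguments K_sub {X Y}.

Theorem corollary3p4 (X Y : topologicalType) (S : set X) (f : X -> Y) :
  urysohn_space Y -> dense S -> {within S, continuous f} ->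
  ((exists g : X -> Y, continuous g /\ (forall s, S s -> g s = f s)) <->
   ((forall V : set Y, open V -> open (X_theta S f V)) /\
    (forall (I : Type) (A : I -> set Y), (forall i, closed (A i)) ->
       \bigcap_(i in [set: I]) A i = set0 ->
       \bigcap_(i in [set: I]) closure (S `&` f @^-1` A i) = set0))).
Proof.
move=> uY dS Hc; split.
- move=> [g [cg gf]].
  have KE : forall x, K S f x = [set g x].
    move=> x; apply/seteqP; split => y.
    + move=> Ky; apply: contrapT => ygx.
      have [U1 [U2 [oU1 U1y oU2 U2g dis]]] := uY _ _ ygx.
      have oP := proj1 (continuousP g) cg _ oU2.
      have [z [cz [t [Pt St] tz]]] := Ky _ (conj oP U2g) U1 oU1 U1y.
      have : (closure U1 `&` closure U2) z.
        by split => //; rewrite -tz -gf //; apply: subset_closure.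
      by rewrite dis.
    + move=> -> P [oP Px] U oU Ugx.
      have oO := proj1 (continuousP g) cg _ oU.
      have [s [[Ps Us] Ss]] := dS (P `&` g @^-1` U) (ex_intro _ x (conj Px Ugx))
        (openI oP oO).
      exists (f s); split; first by apply: subset_closure; rewrite -gf.
      by exists s.
  split.
  + move=> V oV.
    have -> : X_theta S f V = g @^-1` V.
      apply/seteqP; split => x; rewrite /= X_thetaE KE.
        by move=> H; apply: H.
      by move=> Vg y ->.
    exact: (proj1 (continuousP g) cg _ oV).
  + move=> I A cA A0; apply/seteqP; split => // x Hx.
    have : (\bigcap_(i in [set: I]) A i) (g x).
      move=> i I_; apply: contrapT => nA.
      have oC : open (~` A i) by rewrite openC.
      have oO := proj1 (continuousP g) cg _ oC.
      have [s [[Ss As] Os]] := Hx i I_ (g @^-1` ~` A i)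
        (open_nbhs_nbhs (conj oO nA)).
      by apply: Os; rewrite /= gf.
    by rewrite A0.
- move=> [H1 H2].
  have clos : forall (P : set X) (T : set Y), open P -> P `&` S `<=` f @^-1` T ->
      forall x, P x -> closure (S `&` f @^-1` T) x.
    move=> P T oP PT x Px B /nbhs_open_ex [O [oO Ox OB]].
    have [s [[Os Ps] Ss]] := dS (O `&` P) (ex_intro _ x (conj Ox Px))
      (openI oO oP).
    by exists s; split; [split => //; apply: PT | apply: OB].
  have Kne : forall x, exists y, K S f x y.
    move=> x; apply: contrapT => nK.
    pose I := {P : set X | open P /\ P x}.
    pose A := fun i : I => closure (f @` (proj1_sig i `&` S)).
    have := H2 I A (fun i => @closed_closure _ _).
    have -> : \bigcap_(i in [set: I]) A i = set0.
      apply/seteqP; split => // y Hy; apply: nK; exists y => P [oP Px].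
      by apply: closure_theta; apply: (Hy (exist _ P (conj oP Px))).
    move=> /(_ erefl) H.
    have : (\bigcap_(i in [set: I]) closure (S `&` f @^-1` A i)) x.
      move=> [P [oP Px]] _; apply: (clos P) => // z [Pz Sz].
      by apply: subset_closure; exists z.
    by rewrite H.
  have Kuniq : forall x y1 y2, K S f x y1 -> K S f x y2 -> y1 = y2.
    move=> x y1 y2 K1 K2; apply: contrapT => ne.
    have [U1 [U2 [oU1 U1y oU2 U2y dis]]] := uY _ _ ne.
    pose A := fun b : bool => if b then closure U1 else closure U2.
    have := H2 bool A (fun b => if b as b return closed (A b)
       then @closed_closure _ _ else @closed_closure _ _).
    have -> : \bigcap_(i in [set: bool]) A i = set0.
      apply/seteqP; split => // y Hy.
      by rewrite -dis; split; [apply: (Hy true) | apply: (Hy false)].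
    move=> /(_ erefl) H.
    have : (\bigcap_(i in [set: bool]) closure (S `&` f @^-1` A i)) x.
      move=> b _ B /nbhs_open_ex [O [oO Ox OB]].
      have [U [y [oU Uy Ky AU]]] : exists U y,
          [/\ open U, U y, K S f x y & A b = closure U].
        by case: b; [exists U1, y1 | exists U2, y2].
      have [z [cz [t [Ot St] tz]]] := Ky O (conj oO Ox) U oU Uy.
      by exists t; split; [split => //; rewrite /= AU tz | apply: OB].
    by rewrite H.
  have [g Hg] := choice Kne.
  have KE : forall x, K S f x = [set g x].
    move=> x; apply/seteqP; split => y /=.
      by move=> Ky; apply: (Kuniq x) => //; apply: Hg.
    by move=> ->; apply: Hg.
  exists g; split.
  + apply/continuousP => V oV.
    have <- : X_theta S f V = g @^-1` V.
      apply/seteqP; split => x; rewrite /= X_thetaE KE.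
        by move=> H; apply: H.
      by move=> Vg y ->.
    exact: H1.
  + move=> s Ss; apply: (Kuniq s); first exact: Hg.
    exact: fs_in_K.
Qed.
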